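(* Let $\mathcal{G}=(G,\odot,\leq)$ be a real continuous Alo-group with $G$ an open interval of $\mathbb{R}$ and identity $e$. For all $\tilde a=[a^-,a^+],\tilde b\in[G]$: (1) $\|\tilde a\|_{[\mathcal{G}]}=\|\tilde a^{(-1)}\|_{[\mathcal{G}]}$; (2) $a^-\leq\|\tilde a\|_{[\mathcal{G}]}$ and $a^+\leq\|\tilde a\|_{[\mathcal{G}]}$; (3) $\|\tilde a\|_{[\mathcal{G}]}\geq e$; (4) $\|\tilde a\|_{[\mathcal{G}]}=e\iff a^-=a^+=e$; (5) $\|\tilde a\odot_{[G]}\tilde b\|_{[\mathcal{G}]}\leq\|\tilde a\|_{[\mathcal{G}]}\odot\|\tilde b\|_{[\mathcal{G}]}$.
   Context: An Alo-group $(G,\odot,\leq)$ is an Abelian group with a weak order $\leq$ such that $a\leq b\Rightarrow a\odot c\leq b\odot c$; real means $G\subseteq\mathbb{R}$ with the usual order, continuous means $\odot$ is continuous. $a^{(-1)}$ is the inverse of $a$. The $\mathcal{G}$-norm is $\|a\|_{\mathcal{G}}=\max\{a,a^{(-1)}\}$. $[G]=\{[a^-,a^+]: a^-,a^+\in G,\ a^-\leq a^+\}$. The reciprocal interval is $\tilde a^{(-1)}=[(a^+)^{(-1)},(a^-)^{(-1)}]$, and $\tilde a\odot_{[G]}\tilde b=\{a\odot b: a\in\tilde a, b\in\tilde b\}$. The $[\mathcal{G}]$-norm is $\|\tilde a\|_{[\mathcal{G}]}=\max\{\|a^-\|_{\mathcal{G}},\|a^+\|_{\mathcal{G}}\}\in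 G$. *)

(* Defs.v *)
From Stdlib Require Import Reals.
From Coquelicot Require Import Rbar.
Open Scope R_scope.

Definition G_open_interval (G : R -> Prop) : Prop :=
  exists lo hi : Rbar, forall x, G x <-> (Rbar_lt lo (Finite x) /\ Rbar_lt (Finite x) hi).

Definition op_continuous (G : R -> Prop) (op : R -> R -> R) : Prop :=
  forall x y, G x -> G y ->
  forall eps, 0 < eps -> exists delta, 0 < delta /\
    forall x' y', G x' -> G y' -> Rabs (x' - x) < delta -> Rabs (y' - y) < delta ->
      Rabs (op x' y' - op x y) < eps.

Definition real_alo_group (G : R -> Prop) (op : R -> R -> R) (e : R) (inv : R -> R) : Prop :=
  (forall a b, G a -> G b -> G (op a b)) /\
  (forall a b c, G a -> G b -> G c -> op (op a b) c = op a (op b c)) /\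
  (forall a b, G a -> G b -> op a b = op b a) /\
  G e /\
  (forall a, G a -> op a e = a) /\
  (forall a, G a -> G (inv a) /\ op a (inv a) = e) /\
  (forall a b c, G a -> G b -> G c -> a <= b -> op a c <= op b c).

Definition gnorm (inv : R -> R) (a : R) : R := Rmax a (inv a).

Definition inorm (inv : R -> R) (am ap : R) : R := Rmax (gnorm inv am) (gnorm inv ap).

Definition cl_int (am ap x : R) : Prop := am <= x <= ap.

(* the set  {a (.) b : a in [am,ap], b in [bm,bp]}  (the [G]-product, as a set) *)
Definition iprod_set (op : R -> R -> R) (am ap bm bp : R) (x : R) : Prop :=
  exists a b, cl_int am ap a /\ cl_int bm bp b /\ x = op a b.

(* Main.v *)
Require Import Defs.
From Stdlib Require Import Reals.
From Coquelicot Require Import Rbar.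
Open Scope R_scope.


From Stdlib Require Import Lra.

Lemma G_conv (G : R -> Prop) : G_open_interval G ->
  forall x y z, G x -> G z -> x <= y -> y <= z -> G y.
Proof.
  intros [lo [hi H]] x y z Gx Gz H1 H2.
  apply H in Gx; apply H in Gz; apply H; destruct Gx as [A _]; destruct Gz as [_ B]; split.
  - eapply Rbar_lt_le_trans; [exact A|]; simpl; exact H1.
  - eapply Rbar_le_lt_trans; [|exact B]; simpl; exact H2.
Qed.

Lemma G_Rmax (G : R -> Prop) x y : G x -> G y -> G (Rmax x y).
Proof. intros; unfold Rmax; destruct Rle_dec; auto. Qed.

Section Grp.
Context (G : R -> Prop) (op : R -> R -> R) (e : R) (inv : R -> R)
  (H : real_alo_group G op e inv).

Lemma Gop a b : G a -> G b -> G (op a b).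
Proof. destruct H as [h _]; auto. Qed.
Lemma Gassoc a b c : G a -> G b -> G c -> op (op a b) c = op a (op b c).
Proof. destruct H as [_ [h _]]; auto. Qed.
Lemma Gcomm a b : G a -> G b -> op a b = op b a.
Proof. destruct H as [_ [_ [h _]]]; auto. Qed.
Lemma Ge : G e.
Proof. destruct H as [_ [_ [_ [h _]]]]; auto. Qed.
Lemma Gid a : G a -> op a e = a.
Proof. destruct H as [_ [_ [_ [_ [h _]]]]]; auto. Qed.
Lemma Ginv a : G a -> G (inv a).
Proof. destruct H as [_ [_ [_ [_ [_ [h _]]]]]]; intros; apply h; auto. Qed.
Lemma Ginvr a : G a -> op a (inv a) = e.
Proof. destruct H as [_ [_ [_ [_ [_ [h _]]]]]]; intros; apply h; auto. Qed.
Lemma Gmono a b c : G a -> G b -> G c -> a <= b -> op a c <= op b c.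
Proof. destruct H as [_ [_ [_ [_ [_ [_ h]]]]]]; auto. Qed.

Lemma Gidl a : G a -> op e a = a.
Proof. intros; rewrite Gcomm; auto using Ge, Gid. Qed.

Lemma Gcancel a b c : G a -> G b -> G c -> op a c = op b c -> a = b.
Proof.
  intros Ga Gb Gc E.
  rewrite <- (Gid a), <- (Gid b), <- (Ginvr c), <- !Gassoc, E; auto using Ginv.
Qed.

Lemma Gcancel_l a b c : G a -> G b -> G c -> op c a = op c b -> a = b.
Proof.
  intros Ga Gb Gc E; apply (Gcancel a b c); auto.
  rewrite (Gcomm a c), (Gcomm b c); auto.
Qed.

Lemma Ginv_inv a : G a -> inv (inv a) = a.
Proof.
  intros Ga; apply (Gcancel_l _ _ (inv a)); auto using Ginv.
  rewrite Ginvr, Gcomm, Ginvr; auto using Ginv.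
Qed.

Lemma Ginv_e : inv e = e.
Proof. rewrite <- (Gidl (inv e)), Ginvr; auto using Ge, Ginv. Qed.

Lemma Ginv_op a b : G a -> G b -> inv (op a b) = op (inv a) (inv b).
Proof.
  intros Ga Gb; apply (Gcancel_l _ _ (op a b)); auto using Gop, Ginv.
  rewrite Ginvr by auto using Gop.
  rewrite Gassoc, <- (Gassoc b), (Gcomm b (inv a)), Gassoc, Ginvr, Gid, Ginvr;
    auto using Gop, Ginv.
Qed.

Lemma Gmono_r a b c : G a -> G b -> G c -> a <= b -> op c a <= op c b.
Proof. intros; rewrite (Gcomm c a), (Gcomm c b); auto using Gmono. Qed.

Lemma Gmono2 a b c d : G a -> G b -> G c -> G d -> a <= b -> c <= d -> op a c <= op b d.
Proof.
  intros; apply Rle_trans with (op b c); auto using Gmono, Gmono_r.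
Qed.

Lemma Ginv_anti a b : G a -> G b -> a <= b -> inv b <= inv a.
Proof.
  intros Ga Gb Hab.
  assert (h := Gmono _ _ (op (inv a) (inv b)) Ga Gb ltac:(auto using Gop, Ginv) Hab).
  rewrite <- !Gassoc, Ginvr, Gidl, (Gcomm b (inv a)), Gassoc, Ginvr, Gid in h;
    auto using Gop, Ginv.
Qed.

Lemma Gshift x a : G x -> G a -> op (op x (inv a)) a = x.
Proof. intros; rewrite Gassoc, (Gcomm (inv a) a), Ginvr, Gid; auto using Ginv. Qed.

Lemma Gshift2 x a : G x -> G a -> op (op x a) (inv a) = x.
Proof. intros; rewrite Gassoc, Ginvr, Gid; auto using Ginv. Qed.

Lemma Gnorm_ge a : G a -> e <= gnorm inv a.
Proof.
  intros Ga; unfold gnorm.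
  destruct (Rle_dec e a).
  - apply Rle_trans with a; auto using Rmax_l.
  - apply Rle_trans with (inv a); [|apply Rmax_r].
    rewrite <- Ginv_e; apply Ginv_anti; auto using Ge; lra.
Qed.

End Grp.

Theorem proposition6 (G : R -> Prop) (op : R -> R -> R) (e : R) (inv : R -> R)
  (HG : G_open_interval G) (Halo : real_alo_group G op e inv) (Hcont : op_continuous G op)
  (am ap bm bp : R)
  (Ham : G am) (Hap : G ap) (Ha : am <= ap)
  (Hbm : G bm) (Hbp : G bp) (Hb : bm <= bp) :
  (* (1) the reciprocal interval [ap^(-1), am^(-1)] has the same norm *)
  inorm inv am ap = inorm inv (inv ap) (inv am) /\
  (* (2) *)
  am <= inorm inv am ap /\ ap <= inorm inv am ap /\
  (* (3) *)
  e <= inorm inv am ap /\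
  (* (4) *)
  (inorm inv am ap = e <-> (am = e /\ ap = e)) /\
  (* (5) the [G]-product is an element [cm, cp] of [G], and its norm is bounded *)
  (exists cm cp, G cm /\ G cp /\ cm <= cp /\
     forall x, iprod_set op am ap bm bp x <-> cl_int cm cp x) /\
  (forall cm cp, G cm -> G cp -> cm <= cp ->
     (forall x, iprod_set op am ap bm bp x <-> cl_int cm cp x) ->
     inorm inv cm cp <= op (inorm inv am ap) (inorm inv bm bp)).
Proof.
  assert (Gi := Ginv _ _ _ _ Halo).
  assert (GopH := Gop _ _ _ _ Halo).
  assert (Ginvinv := Ginv_inv _ _ _ _ Halo).
  assert (Gna : G (inorm inv am ap)) by (unfold inorm, gnorm; repeat apply G_Rmax; auto).
  assert (Gnb : G (inorm inv bm bp)) by (unfold inorm, gnorm; repeat apply G_Rmax; auto).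
  assert (L2 : am <= inorm inv am ap /\ ap <= inorm inv am ap /\
               inv am <= inorm inv am ap /\ inv ap <= inorm inv am ap)
    by (unfold inorm, gnorm, Rmax; repeat destruct Rle_dec; lra).
  assert (L2b : bm <= inorm inv bm bp /\ bp <= inorm inv bm bp /\
               inv bm <= inorm inv bm bp /\ inv bp <= inorm inv bm bp)
    by (unfold inorm, gnorm, Rmax; repeat destruct Rle_dec; lra).
  assert (L3 : e <= inorm inv am ap).
  { apply Rle_trans with (gnorm inv am); [eapply Gnorm_ge; eauto|].
    unfold inorm; apply Rmax_l. }
  split.
  { unfold inorm, gnorm; rewrite !Ginvinv by auto.
    unfold Rmax; repeat destruct Rle_dec; lra. }
  split; [tauto|]. split; [tauto|]. split; [exact L3|].
  split.
  { split.
    - intros E. rewrite E in L2.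
      assert (h1 := Ginv_anti _ _ _ _ Halo _ _ (Gi _ Ham) (Ge _ _ _ _ Halo) (proj1 (proj2 (proj2 L2)))).
      assert (h2 := Ginv_anti _ _ _ _ Halo _ _ (Gi _ Hap) (Ge _ _ _ _ Halo) (proj2 (proj2 (proj2 L2)))).
      rewrite Ginvinv, (Ginv_e _ _ _ _ Halo) in h1, h2 by auto. lra.
    - intros [-> ->]. unfold inorm, gnorm; rewrite (Ginv_e _ _ _ _ Halo).
      unfold Rmax; repeat destruct Rle_dec; lra. }
  assert (Hfw : forall x, iprod_set op am ap bm bp x -> op am bm <= x <= op ap bp).
  { intros x [a [b [[h1 h2] [[h3 h4] ->]]]].
    assert (G a) by (eapply (G_conv G HG am a ap); eauto).
    assert (G b) by (eapply (G_conv G HG bm b bp); eauto).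
    split; apply (Gmono2 _ _ _ _ Halo); auto. }
  assert (Hbw : forall x, op am bm <= x <= op ap bp -> iprod_set op am ap bm bp x).
  { intros x [h1 h2].
    assert (Gx : G x) by (eapply (G_conv G HG (op am bm) x (op ap bp));
      eauto using GopH).
    destruct (Rle_dec x (op am bp)).
    - exists am, (op x (inv am)). split; [unfold cl_int; lra|].
      split; [|rewrite (Gcomm _ _ _ _ Halo), (Gshift _ _ _ _ Halo); auto using GopH].
      assert (h3 := Gmono _ _ _ _ Halo _ _ (inv am) (Gop _ _ _ _ Halo _ _ Ham Hbm) Gx (Gi _ Ham) h1).
      assert (h4 := Gmono _ _ _ _ Halo _ _ (inv am) Gx (Gop _ _ _ _ Halo _ _ Ham Hbp) (Gi _ Ham) r).
      rewrite (Gcomm _ _ _ _ Halo am bm), (Gshift2 _ _ _ _ Halo) in h3 by auto.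
      rewrite (Gcomm _ _ _ _ Halo am bp), (Gshift2 _ _ _ _ Halo) in h4 by auto.
      split; auto.
    - exists (op x (inv bp)), bp. split; [|split; [unfold cl_int; lra|
        rewrite (Gshift _ _ _ _ Halo); auto]].
      assert (h3 := Gmono _ _ _ _ Halo _ _ (inv bp) (Gop _ _ _ _ Halo _ _ Ham Hbp) Gx (Gi _ Hbp) ltac:(lra)).
      assert (h4 := Gmono _ _ _ _ Halo _ _ (inv bp) Gx (Gop _ _ _ _ Halo _ _ Hap Hbp) (Gi _ Hbp) h2).
      rewrite (Gshift2 _ _ _ _ Halo) in h3 by auto.
      rewrite (Gshift2 _ _ _ _ Halo) in h4 by auto.
      split; auto. }
  split.
  { exists (op am bm), (op ap bp).
    split; [auto using GopH|]. split; [auto using GopH|].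
    split; [apply (Gmono2 _ _ _ _ Halo); auto|].
    intros x; split; [apply Hfw|apply Hbw]. }
  intros cm cp Gcm Gcp Hc Heq.
  assert (Hab : op am bm <= op ap bp) by (apply (Gmono2 _ _ _ _ Halo); auto).
  assert (E1 : cm = op am bm).
  { assert (w : cl_int cm cp cm) by (unfold cl_int; lra).
    assert (u := Hfw cm (proj2 (Heq cm) w)).
    assert (w2 : op am bm <= op am bm <= op ap bp) by lra.
    assert (v := proj1 (Heq (op am bm)) (Hbw _ w2)). unfold cl_int in v. lra. }
  assert (E2 : cp = op ap bp).
  { assert (w : cl_int cm cp cp) by (unfold cl_int; lra).
    assert (u := Hfw cp (proj2 (Heq cp) w)).
    assert (w2 : op am bm <= op ap bp <= op ap bp) by lra.
    assert (v := proj1 (Heq (op ap bp)) (Hbw _ w2)). unfold cl_int in v. lra. }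
  subst cm cp.
  unfold inorm at 1, gnorm.
  rewrite !(Ginv_op _ _ _ _ Halo) by auto.
  repeat apply Rmax_lub; apply (Gmono2 _ _ _ _ Halo); auto using GopH; tauto.
Qed.
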